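(* For each $n$, the map sending a UEC-representative $\mathcal{U}$ on vertex set $[n]$ to its DAG-reduction $\mathcal{D}^\mathcal{U}$ is injective; hence it is a bijection between the set of UEC-representatives on $[n]$ and the set of their DAG-reductions.
   Context: A UEC-representative on $[n]$ is an undirected graph equal to the unconditional dependence graph $\mathcal{U}^\mathcal{D}$ of some DAG $\mathcal{D}$ on $[n]$ ($\mathcal{U}^\mathcal{D}$ joins distinct $v,w$ iff there is a trek, i.e. a collider-free path without repeated vertices, between them). $\mathtt{init\_CPDAG}(\mathcal{U})$ is obtained from $\mathcal{U}$ by orienting, for every induced path $v-v'-v''$, its edges as $v\to v'\leftarrow v''$, then removing edges that received both orientations, directing edges that received one, and leaving the rest undirected. For $\mathcal{G}=\mathtt{init\_CPDAG}(\mathcal{U})$ and a vertex $v$, the chain component $\mathrm{cc}_\mathcal{G}(v)$ is the set of vertices joined to $v$ by a path of undirected edges (including $v$). The DAG-reduction $\mathcal{D}^\mathcal{U}$ has as vertices the chain components of $\mathcal{G}$ (subsets of $[n]$) and an edge $\mathbf{v}\to\mathbf{w}$ iff some $v\in\mathbf{v}$, $w\in\mathbf{w}$ satisfy $v\to w$ in $\mathcal{G}$. *)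

(* Defs.v *)
From mathcomp Require Import all_boot.
Set Implicit Arguments. Unset Strict Implicit. Unset Printing Implicit Defensive.

Section Defs.
Variable n : nat.
Notation V := 'I_n.

(* An undirected graph on [n] is a set of ordered pairs, (v,w) \in U meaning v - w
   (for UEC-representatives it is automatically symmetric and loopless). *)

Definition dedge (D : {set V * V}) : rel V := fun a b => (a, b) \in D.

Definition is_DAG (D : {set V * V}) : Prop :=
  forall a b, (a, b) \in D -> ~~ connect (dedge D) b a.

Definition adjD (D : {set V * V}) : rel V := fun a b => dedge D a b || dedge D b a.

Definition trek (D : {set V * V}) (v w : V) : Prop :=
  exists p : seq V,
    [/\ path (adjD D) v p, last v p = w, uniq (v :: p) &
        forall i, i.+2 < size (v :: p) ->
          ~~ (dedge D (nth v (v :: p) i) (nth v (v :: p) i.+1) &&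
              dedge D (nth v (v :: p) i.+2) (nth v (v :: p) i.+1))].

Definition is_udg_of (D : {set V * V}) (U : {set V * V}) : Prop :=
  forall v w, (v, w) \in U <-> (v != w /\ trek D v w).

Definition is_UEC_rep (U : {set V * V}) : Prop :=
  exists D : {set V * V}, is_DAG D /\ is_udg_of D U.

(* init_CPDAG: edge a - b receives orientation a -> b iff a - b - c is an
   induced path of U for some c. *)
Definition mark (U : {set V * V}) (a b : V) : bool :=
  [exists c : V, [&& a != b, b != c, a != c, (a, b) \in U, (b, c) \in U
                   & (a, c) \notin U]].

Definition cpdag_dir (U : {set V * V}) (a b : V) : bool :=
  [&& (a, b) \in U, mark U a b & ~~ mark U b a].

Definition cpdag_undir (U : {set V * V}) (a b : V) : bool :=
  [&& (a, b) \in U, ~~ mark U a b & ~~ mark U b a].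

Definition cc (U : {set V * V}) (v : V) : {set V} :=
  [set w | connect (cpdag_undir U) v w].

Definition DAG_reduction (U : {set V * V})
  : {set {set V}} * {set {set V} * {set V}} :=
  ([set cc U v | v : V],
   [set (cc U vw.1, cc U vw.2) | vw in [set vw : V * V | cpdag_dir U vw.1 vw.2]]).

End Defs.

(* Main.v *)
Require Import Defs.
From mathcomp Require Import all_boot.
Set Implicit Arguments. Unset Strict Implicit. Unset Printing Implicit Defensive.

Section DagPart.
Variable n : nat.
Notation V := 'I_n.
Variable D : {set V * V}.
Hypothesis hD : is_DAG D.
Notation e := (dedge D).

Lemma no2cycle a b : e a b -> e b a -> False.
Proof. by move=> Hab Hba; move: (hD Hab); rewrite (connect1 Hba). Qed.

Lemma D1 x : exists s, (forall a, ~~ e a s) /\ connect e s x.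
Proof.
have: forall k x, #|[set y | connect e y x]| <= k ->
  exists s, (forall a, ~~ e a s) /\ connect e s x; last by apply; apply: leqnn.
elim=> [|k IH] {}x Hk.
  by move: Hk; rewrite leqn0 => /eqP/card0_eq/(_ x); rewrite inE connect0.
case: (pickP (fun a => e a x)) => [a Hax|Hno]; last first.
  by exists x; split; [move=> a; rewrite Hno | exact: connect0].
have sub: [set y | connect e y a] \proper [set y | connect e y x].
  apply/properP; split.
    by apply/subsetP => y; rewrite !inE => Hy; apply: connect_trans Hy (connect1 Hax).
  by exists x; rewrite !inE ?connect0 //; apply: hD.
have [s [Hs Hsa]] := IH a (leq_trans (proper_card sub) Hk).
by exists s; split => //; apply: connect_trans Hsa (connect1 Hax).
Qed.

Lemma src_anc s c : (forall a, ~~ e a s) -> connect e c s -> c = s.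
Proof.
move=> Hs /connectP [p]; elim/last_ind: p => [|p z _] /=; first by [].
rewrite rcons_path last_rcons => /andP[_ H] Hsz.
by move: (Hs (last c p)); rewrite Hsz H.
Qed.

Fixpoint colfree (s : seq V) : bool :=
  if s is x :: ((y :: z :: _) as t) then ~~ (e x y && e z y) && colfree t else true.

Lemma colfree_nth x0 s : colfree s -> forall i, i.+2 < size s ->
  ~~ (e (nth x0 s i) (nth x0 s i.+1) && e (nth x0 s i.+2) (nth x0 s i.+1)).
Proof.
elim: s => [|x s IH] //; case: s IH => [|y [|z t]] IH //= /andP[H1 H2] [|i] //= Hi.
exact: (IH H2 i).
Qed.

Lemma nth_colfree x0 s : (forall i, i.+2 < size s ->
  ~~ (e (nth x0 s i) (nth x0 s i.+1) && e (nth x0 s i.+2) (nth x0 s i.+1))) ->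
  colfree s.
Proof.
elim: s => [|x s IH] //; case: s IH => [|y [|z t]] IH H //=.
apply/andP; split; first exact: (H 0).
by apply: IH => i Hi; exact: (H i.+1).
Qed.

Lemma colfree_tail x s : colfree (x :: s) -> colfree s.
Proof. by case: s => [|y [|z t]] //= /andP[]. Qed.

Lemma fwd v y t : path (adjD D) v (y :: t) -> colfree (v :: y :: t) -> e v y ->
  connect e v (last y t).
Proof.
elim: t v y => [|z t IH] v y /=; first by move=> _ _ H; apply: connect1.
move=> /and3P[_ Hyz Hp] /andP[Hc1 Hc2] Hvy.
have Hyz' : e y z.
  move: Hyz; rewrite /adjD => /orP[//|Hzy]; by move: Hc1; rewrite Hvy Hzy.
apply: connect_trans (connect1 Hvy) _; apply: IH => //=.
by rewrite Hp andbT /adjD Hyz'.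
Qed.

Lemma main_anc v s : path (adjD D) v s -> colfree (v :: s) ->
  exists c, connect e c v /\ connect e c (last v s).
Proof.
elim: s v => [|y t IH] v; first by exists v; rewrite connect0.
move=> Hp Hc; case: (boolP (e v y)) => Hvy.
  by exists v; split; [apply: connect0 | rewrite /=; apply: fwd].
move: Hp => /= /andP[Hvy' Hp].
have Hyv : e y v by move: Hvy'; rewrite /adjD (negbTE Hvy).
have [c [Hc1 Hc2]] := IH y Hp (colfree_tail Hc).
by exists c; split => //; apply: connect_trans Hc1 (connect1 Hyv).
Qed.

Lemma trek_anc v w : trek D v w -> exists c, connect e c v /\ connect e c w.
Proof.
case=> p [Hp Hl _ Hcol]; rewrite -Hl; apply: main_anc Hp _.
exact: (nth_colfree Hcol).
Qed.

Lemma anc_all x p : path e x p -> forall y, y \in x :: p -> connect e y (last x p).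
Proof.
elim: p x => [|z p IH] x /=.
  by move=> _ y; rewrite inE => /eqP->; apply: connect0.
move=> /andP[Hxz Hp] y; rewrite inE => /orP[/eqP->|Hy].
  exact: connect_trans (connect1 Hxz) (IH z Hp z (mem_head _ _)).
exact: IH.
Qed.

Lemma split_last v c q : path e c q -> uniq (c :: q) ->
  has (fun z => connect e z v) (c :: q) ->
  exists x q', [/\ connect e x v, path e x q', last x q' = last c q,
                uniq (x :: q') & all (fun y => ~~ connect e y v) q'].
Proof.
elim: q c => [|y t IH] c.
  by move=> _ _ /=; rewrite orbF => H; exists c, [::].
move=> /= /andP[Hcy Hp] Hu Hh.
case: (boolP (has (fun z => connect e z v) (y :: t))) => Hh2.
  by apply: IH => //; case/andP: Hu.
exists c, (y :: t); split => //.
- by case/orP: Hh => // H; move: Hh2; rewrite /= H.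
- by rewrite /= Hcy.
- apply/allP => z Hz; apply/negP => Hzv; move/negP: Hh2; apply.
  by apply/hasP; exists z.
Qed.

Lemma revlast (x : V) p : rev (x :: p) = last x p :: rev (belast x p).
Proof. by rewrite lastI rev_rcons. Qed.

Lemma lastrev (x : V) p : last (last x p) (rev (belast x p)) = x.
Proof.
by rewrite -[LHS]/(last x (last x p :: rev (belast x p))) -revlast rev_cons last_rcons.
Qed.

Lemma fwdcol v r : path e v r -> colfree (v :: r).
Proof.
elim: r v => [|y t IH] v //= /andP[Hvy Hp].
case: t IH Hp => [|z t] IH Hp //.
apply/andP; split; last exact: IH y Hp.
apply/negP => /andP[_ Hzy].
by move: Hp => /= /andP[Hyz _]; apply: (no2cycle Hyz Hzy).
Qed.

Lemma vshape v r1 r2 : path (fun a b => e b a) v r1 -> path e (last v r1) r2 ->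
  colfree (v :: r1 ++ r2).
Proof.
elim: r1 v => [|y r1 IH] v /=; first by move=> _; apply: fwdcol.
move=> /andP[Hyv Hp] Hq.
have IH' := IH y Hp Hq.
case E: (r1 ++ r2) IH' => [|z t] IH' //.
apply/andP; split; last exact: IH'.
apply/negP => /andP[Hvy _].
exact: (no2cycle Hvy Hyv).
Qed.

Lemma anc_trek c v w : connect e c v -> connect e c w -> trek D v w.
Proof.
move=> Hcv /connectP [q0 Hq0 ->]; case/shortenP: Hq0 => q Hq Huq _.
have [x [q' [Hxv Hq' Hl Hu' Hall]]] := split_last Hq Huq (introT orP (or_introl Hcv)).
rewrite -Hl.
move/connectP: Hxv => [p0 Hp0 Hv]; rewrite Hv; move: Hall; rewrite Hv.
case/shortenP: Hp0 => p Hp Hup _ Hall.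
exists (rev (belast x p) ++ q'); split.
- rewrite cat_path lastrev; apply/andP; split.
  + apply: (@sub_path _ (fun a b => e b a)).
      by move=> a b H; rewrite /adjD H orbT.
    by rewrite (rev_path (fun a b : 'I_n => e b a)).
  + apply: (sub_path _ Hq'); by move=> a b H; rewrite /adjD H.
- by rewrite last_cat lastrev.
- rewrite -cat_cons -revlast cat_uniq rev_uniq Hup /=.
  move: Hu' => /= /andP[_ ->]; rewrite andbT.
  apply/hasPn => z Hz; rewrite mem_rev; apply/negP => Hzp.
  by move: (allP Hall z Hz); rewrite (anc_all Hp Hzp).
- move=> i; apply: colfree_nth; apply: vshape.
    by rewrite (rev_path (fun a b : 'I_n => e b a)).
  by rewrite lastrev.
Qed.
End DagPart.

Definition Ns n (U : {set 'I_n * 'I_n}) (x : 'I_n) : {set 'I_n} :=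
  [set y | (y == x) || ((x, y) \in U)].
Definition clique n (U : {set 'I_n * 'I_n}) (S : {set 'I_n}) : Prop :=
  forall a b, a \in S -> b \in S -> b \in Ns U a.

Lemma rep_props n (U : {set 'I_n * 'I_n}) : is_UEC_rep U ->
  [/\ (forall a b, (a, b) \in U -> (b, a) \in U), (forall a, (a, a) \notin U) &
      (forall u w, (u == w) || ((u, w) \in U) ->
         exists s, [/\ clique U (Ns U s), u \in Ns U s & w \in Ns U s])].
Proof.
case=> D [hD hU].
have key : forall s y, (forall a, ~~ dedge D a s) ->
    (y \in Ns U s) = connect (dedge D) s y.
  move=> s y Hs; rewrite inE; apply/idP/idP.
    case/orP => [/eqP->|/hU [_ /trek_anc [c [Hc1 Hc2]]]]; first exact: connect0.
    by rewrite -(src_anc Hs Hc1).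
  move=> Hsy; case: eqP => //= Hne; apply/hU; split; first by apply/eqP=> H; apply: Hne.
  exact: (anc_trek hD (connect0 _ s) Hsy).
split.
- move=> a b /hU [Hab /trek_anc [c [Hc1 Hc2]]]; apply/hU; split.
    by rewrite eq_sym.
  exact: (anc_trek hD Hc2 Hc1).
- by move=> a; apply/negP => /hU [/eqP].
move=> u w Huw.
have [c [Hcu Hcw]] : exists c, connect (dedge D) c u /\ connect (dedge D) c w.
  case/orP: Huw => [/eqP->|/hU [_ /trek_anc //]].
  by exists w; rewrite connect0.
have [s [Hs Hsc]] := D1 hD c.
exists s; split.
- move=> a b; rewrite (key s a) // (key s b) // => Ha Hb; rewrite inE; case: eqP => //= Hne.
  apply/hU; split; first by apply/eqP => H; apply: Hne.
  exact: (anc_trek hD Ha Hb).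
- by rewrite key //; apply: connect_trans Hsc Hcu.
- by rewrite key //; apply: connect_trans Hsc Hcw.
Qed.

Section GraphPart.
Variable n : nat.
Variable U : {set 'I_n * 'I_n}.
Hypothesis hsym : forall a b, (a, b) \in U -> (b, a) \in U.
Hypothesis hirr : forall a, (a, a) \notin U.
Hypothesis hCl : forall u w, (u == w) || ((u, w) \in U) ->
         exists s, [/\ clique U (Ns U s), u \in Ns U s & w \in Ns U s].

Lemma Ns_self x : x \in Ns U x.
Proof. by rewrite inE eqxx. Qed.

Lemma Ns_sym a b : b \in Ns U a -> a \in Ns U b.
Proof. by rewrite !inE => /orP[/eqP->|/hsym->]; rewrite ?eqxx ?orbT. Qed.

Lemma Ns_adj a b : a != b -> (b \in Ns U a) = ((a, b) \in U).
Proof. by move=> H; rewrite inE eq_sym (negbTE H). Qed.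

Lemma markE a b : (a, b) \in U -> mark U a b = ~~ (Ns U b \subset Ns U a).
Proof.
move=> Hab; rewrite /mark; apply/existsP/subsetPn.
  move=> [c /and5P[_ Hbc Hac _ /andP[HbcU HacU]]]; exists c.
    by rewrite inE HbcU orbT.
  by rewrite inE negb_or eq_sym Hac.
move=> [c Hcb Hca]; exists c.
move: Hca; rewrite inE negb_or => /andP[Hca HacU].
have Hab' : a != b by apply/eqP => E; move: (hirr a); rewrite {2}E Hab.
have HbcU : (b, c) \in U.
  move: Hcb; rewrite inE => /orP[/eqP E|//]; by move: HacU; rewrite E Hab.
have Hbc : b != c by apply/eqP => E; move: (hirr b); rewrite {2}E HbcU.
by rewrite Hab' Hbc eq_sym Hca Hab HbcU HacU.
Qed.

Lemma undirE a b : cpdag_undir U a b = ((a, b) \in U) && (Ns U a == Ns U b).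
Proof.
rewrite /cpdag_undir; case Hab: ((a, b) \in U) => /=; last by [].
by rewrite (markE Hab) (markE (hsym Hab)) !negbK eqEsubset andbC.
Qed.

Lemma dirE a b : cpdag_dir U a b =
  [&& (a, b) \in U, ~~ (Ns U b \subset Ns U a) & Ns U a \subset Ns U b].
Proof.
rewrite /cpdag_dir; case Hab: ((a, b) \in U) => /=; last by [].
by rewrite (markE Hab) (markE (hsym Hab)) negbK.
Qed.

Lemma ccE v w : (w \in cc U v) = (Ns U v == Ns U w).
Proof.
rewrite inE; apply/idP/eqP.
  move/connectP => [p Hp ->]; elim: p v Hp => //= y p IH v /andP[Hvy Hp].
  by rewrite -(IH y Hp); move: Hvy; rewrite undirE => /andP[_ /eqP].
move=> Heq; case: (eqVneq v w) => [->|Hne]; first exact: connect0.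
apply: connect1; rewrite undirE Heq eqxx andbT -Ns_adj //.
by rewrite Heq Ns_self.
Qed.

Lemma cc_eq a b : (cc U a = cc U b) <-> (Ns U a = Ns U b).
Proof.
split.
  move=> H; have : b \in cc U a by rewrite H ccE.
  by rewrite ccE => /eqP.
by move=> H; apply/setP => z; rewrite !ccE H.
Qed.

Notation R := (DAG_reduction U).

Lemma in_R2 X Y : (X, Y) \in R.2 ->
  exists a b, [/\ X = cc U a, Y = cc U b & cpdag_dir U a b].
Proof.
rewrite /DAG_reduction /= => /imsetP [[a b]]; rewrite inE /= => Hd [-> ->].
by exists a, b.
Qed.

Lemma R2_in a b : cpdag_dir U a b -> (cc U a, cc U b) \in R.2.
Proof. by move=> H; apply/imsetP; exists (a, b); rewrite ?inE. Qed.

Lemma src_clique v : (forall X, (X, cc U v) \notin R.2) -> clique U (Ns U v).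
Proof.
move=> Hsrc; have [s [Hcl _ Hv]] := @hCl v v (introT orP (or_introl (eqxx v))).
have sub : Ns U s \subset Ns U v by apply/subsetP => b Hb; apply: Hcl.
case: (boolP (Ns U v \subset Ns U s)) => Hvs.
  by have -> : Ns U v = Ns U s by apply/eqP; rewrite eqEsubset Hvs sub.
have Hne : s != v by apply: contraNneq Hvs => ->; apply: subxx.
have : cpdag_dir U s v by rewrite dirE -Ns_adj // Hv Hvs sub.
by move/R2_in; rewrite (negbTE (Hsrc _)).
Qed.

Definition Phi (A B : {set 'I_n}) : Prop :=
  exists C, [/\ C \in R.1, (forall X, (X, C) \notin R.2),
                (A == C) || ((C, A) \in R.2) & (B == C) || ((C, B) \in R.2)].

Lemma below s u : clique U (Ns U s) -> u \in Ns U s ->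
  (cc U u == cc U s) || ((cc U s, cc U u) \in R.2).
Proof.
move=> Hcl Hu.
have sub : Ns U s \subset Ns U u by apply/subsetP => b Hb; apply: Hcl.
case: (boolP (Ns U u \subset Ns U s)) => Hus.
  by apply/orP; left; apply/eqP/cc_eq/eqP; rewrite eqEsubset Hus sub.
have Hne : s != u by apply: contraNneq Hus => ->; apply: subxx.
by rewrite R2_in ?orbT // dirE -Ns_adj // Hu Hus sub.
Qed.

Lemma above v u : (cc U u == cc U v) || ((cc U v, cc U u) \in R.2) -> u \in Ns U v.
Proof.
case/orP => [/eqP/cc_eq <-|/in_R2 [a [b [/cc_eq Ha /cc_eq Hb Hd]]]].
  exact: Ns_self.
move: Hd; rewrite dirE => /andP[Hab _].
have : a \in Ns U b by apply: Ns_sym; rewrite inE Hab orbT.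
by rewrite -Hb => /Ns_sym; rewrite Ha.
Qed.

Lemma char u w : u != w -> ((u, w) \in U) <-> Phi (cc U u) (cc U w).
Proof.
move=> Huw; split.
  move=> H; have [s [Hcl Hu Hw]] := hCl (introT orP (or_intror H)).
  exists (cc U s); split.
  - by apply/imsetP; exists s.
  - move=> X; apply/negP => /in_R2 [a [b [_ /cc_eq Hb Hd]]].
    move: Hd; rewrite dirE => /and3P[Hab Hn _]; move/negP: Hn; apply.
    apply/subsetP => y; rewrite -Hb => Hy; apply: Hcl => //.
    by rewrite Hb; apply: Ns_sym; rewrite inE Hab orbT.
  - exact: below.
  - exact: below.
move=> [C [/imsetP [v _ ->] Hsrc Hu Hw]].
have := src_clique Hsrc (above Hu) (above Hw).
by rewrite Ns_adj.
Qed.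

End GraphPart.

Theorem lemma5p6 (n : nat) (U1 U2 : {set 'I_n * 'I_n}) :
  is_UEC_rep U1 -> is_UEC_rep U2 ->
  DAG_reduction U1 = DAG_reduction U2 -> U1 = U2.
Proof.
move=> /rep_props [s1 i1 c1] /rep_props [s2 i2 c2] Heq.
have ccEq : forall u, cc U1 u = cc U2 u.
  move=> u.
  have : cc U2 u \in (DAG_reduction U1).1 by rewrite Heq; apply/imsetP; exists u.
  move=> /imsetP [v _ Hv].
  have : u \in cc U1 v by rewrite -Hv (ccE s2 i2).
  by rewrite (ccE s1 i1) => /eqP/(cc_eq s1 i1) <-.
apply/setP => [[u w]]; case: (eqVneq u w) => [->|Huw].
  by rewrite (negbTE (i1 w)) (negbTE (i2 w)).
apply/idP/idP => H.
  apply/(char s2 i2 c2 Huw); have := (char s1 i1 c1 Huw).1 H.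
  by rewrite /Phi Heq !ccEq.
apply/(char s1 i1 c1 Huw); have := (char s2 i2 c2 Huw).1 H.
by rewrite /Phi -Heq -!ccEq.
Qed.
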